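(* Let $S$ be a numerical semigroup with Frobenius number $F$ and $\mathrm{l}(S)\ge 2$. Then $\mathrm{h}(S)$ is defined, $S\cup\{\mathrm{h}(S)\}$ is a numerical semigroup with Frobenius number $F$, and $\mathrm{l}(S\cup\{\mathrm{h}(S)\})=\mathrm{l}(S)-2$.
   Context: A numerical semigroup is a subset $S\subseteq\mathbb{N}$ closed under addition with $0\in S$ and $\mathbb{N}\setminus S$ finite; $\mathrm{F}(S)=\max(\mathbb{Z}\setminus S)$. $\mathrm{N}(S)=\{s\in S\mid s<\mathrm{F}(S)\}$, $\mathrm{L}(S)=\{x\in\mathbb{N}\setminus S\mid \mathrm{F}(S)-x\notin \mathrm{N}(S)\}$, $\mathrm{l}(S)=\#\mathrm{L}(S)$. For a numerical semigroup $S$ with $\mathrm{l}(S)\ge2$, $\mathrm{h}(S)=\max\{x\in\mathbb{N}\setminus S\mid \mathrm{F}(S)-x\in\mathbb{N}\setminus S,\ x\ne \mathrm{F}(S)/2\}$ (which equals $\max\mathrm{L}(S)$). *)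

(* Defs.v *)
From mathcomp Require Import all_boot.
Set Implicit Arguments. Unset Strict Implicit. Unset Printing Implicit Defensive.

Definition numerical_semigroup (S : pred nat) : Prop :=
  [/\ 0 \in S,
      (forall a b, a \in S -> b \in S -> a + b \in S) &
      (exists N, forall n, N <= n -> n \in S)].

(* F is the Frobenius number max(Z \ S), in the case where it is a natural
   number (i.e. S <> N): F is a gap and every integer > F lies in S. *)
Definition is_frobenius (S : pred nat) (F : nat) : Prop :=
  F \notin S /\ forall n, F < n -> n \in S.

Definition inN (S : pred nat) (F s : nat) : bool := (s \in S) && (s < F).

(* L(S) = {x in N \ S | F - x notin N(S)}; all gaps are <= F, so we
   enumerate x in [0, F]. Note x <= F, so F - x is an honest difference. *)
Definition Lset (S : pred nat) (F : nat) : seq nat :=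
  [seq x <- iota 0 F.+1 | (x \notin S) && ~~ inN S F (F - x)].

Definition lnum (S : pred nat) (F : nat) : nat := size (Lset S F).

(* h is h(S) = max{x in N \ S | F - x in N \ S, x <> F/2}.
   (F - x in N \ S forces x <= F; "x <> F/2" is written 2x <> F.) *)
Definition is_h (S : pred nat) (F h : nat) : Prop :=
  [/\ h \notin S, h <= F, F - h \notin S, h.*2 != F &
      forall y, y \notin S -> y <= F -> F - y \notin S -> y.*2 != F -> y <= h].

Definition add_elt (S : pred nat) (h : nat) : pred nat :=
  fun n => (n \in S) || (n == h).

(* Main.v *)
Require Import Defs.
From mathcomp Require Import all_boot.
From mathcomp Require Import zify.

Lemma in_add (S : pred nat) h n : (n \in add_elt S h) = (n \in S) || (n == h).
Proof. by rewrite unfold_in. Qed.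

Lemma memL (S : pred nat) F x : 0 \in S -> x \in Lset S F ->
  [/\ x \notin S, x <= F & F - x \notin S].
Proof.
move=> S0; rewrite mem_filter mem_iota /= add0n ltnS /inN => /andP[/andP[xS nN] xF].
split => //; apply: contra nN => H; rewrite H /=.
have : x != 0 by apply: contraNneq xS => ->.
lia.
Qed.

Theorem lemma9 (S : pred nat) (F : nat) :
  numerical_semigroup S -> is_frobenius S F -> 2 <= lnum S F ->
  exists h : nat,
    [/\ is_h S F h,
        numerical_semigroup (add_elt S h),
        is_frobenius (add_elt S h) F &
        lnum (add_elt S h) F = lnum S F - 2].
Proof.
move=> [S0 Sadd [N HN]] [FS Fgt] hl.
have F0 : 0 < F by rewrite lt0n; apply: contraNneq FS => ->.
have Lu : uniq (Lset S F) by rewrite filter_uniq // iota_uniq.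
pose q y := [&& y \notin S, y <= F, F - y \notin S & y.*2 != F].
have [c qc] : exists c, q c.
  move: hl Lu; rewrite /lnum.
  case E: (Lset S F) => [|a [|b r]] //= _ /andP[]; rewrite inE negb_or => /andP[ab _] _.
  have sub : forall x, x \in [:: a, b & r] -> x \in Lset S F by move=> x; rewrite E.
  have [aS aF aFS] := @memL S F _ S0 (sub a (mem_head _ _)).
  have [bS bF bFS] := @memL S F _ S0 (sub b ltac:(by rewrite !inE eqxx orbT)).
  case: (eqVneq a.*2 F) => a2.
    exists b; rewrite /q bS bF bFS /=; apply/eqP => b2.
    by move/eqP: ab; apply; lia.
  by exists a; rewrite /q aS aF aFS a2.
have qb : forall y, q y -> y <= F by move=> y /and4P[].
have [h qh hmax] := ex_maxnP (ex_intro _ c qc) qb.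
move: (qh) => /and4P[hS hF hFS h2].
have hgt : F < h.*2.
  have : F - h <= h by apply: hmax; rewrite /q hFS leq_subr /= subKn // hS /=; lia.
  lia.
have hF' : h < F by apply: contraNT hFS; rewrite -leqNgt => hF2; have -> : F - h = 0 by lia.
have hpos : 0 < h by apply: contraNT hS; rewrite -leqNgt leqn0 => /eqP ->.
exists h; split.
- split => // y yS yF yFS y2; apply: hmax; by rewrite /q yS yF yFS y2.
- have key : forall b, b \in S -> h + b \in add_elt S h.
    move=> b bS; rewrite in_add.
    case: (posnP b) => [->|bp]; first by rewrite addn0 eqxx orbT.
    apply/orP; left; apply: contraT => hbS.
    have hbF : h + b <= F by apply: contraNT hbS; rewrite -ltnNge; exact: Fgt.
    have : h + b <= h.
      apply: hmax; rewrite /q hbS hbF /=; apply/andP; split; last by apply/eqP; lia.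
      apply: contra hFS => H; have -> : F - h = F - (h + b) + b by lia.
      exact: Sadd.
    lia.
  split; first by rewrite in_add S0.
  + move=> a b; rewrite !in_add => /orP[aS|/eqP->] /orP[bS|/eqP->].
    * by rewrite Sadd.
    * by rewrite addnC -in_add key.
    * by rewrite -in_add key.
    * by rewrite addnn Fgt.
  + by exists N => n /HN nS; rewrite in_add nS.
- split; last by move=> n /Fgt nS; rewrite in_add nS.
  by rewrite in_add negb_or FS; apply/eqP => E; move: hF'; rewrite E ltnn.
- rewrite /lnum.
  have -> : Lset (add_elt S h) F = [seq x <- Lset S F | (x != h) && (x != F - h)].
    rewrite /Lset -filter_predI; apply: eq_in_filter => x; rewrite mem_iota add0n ltnS => /andP[_ xF] /=.
    rewrite /inN !in_add.
    have E1 : (F - x == h) = (x == F - h) by apply/eqP/eqP; lia.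
    rewrite E1.
    case: (posnP x) => [x0|xp].
      by rewrite x0 S0 /= andbF.

    have E2 : F - x < F by lia.
    rewrite E2 !andbT.
    by case: (x \in S); case: (x == h); case: (x == F - h); case: (F - x \in S).
  have hL : h \in Lset S F by rewrite mem_filter mem_iota add0n ltnS hF hS /inN (negbTE hFS).
  have hL' : F - h \in Lset S F.
    by rewrite mem_filter mem_iota add0n ltnS leq_subr hFS /inN subKn // (negbTE hS).
  have ne : h != F - h by apply/eqP; lia.
  rewrite size_filter.
  have := count_predC (fun x => (x != h) && (x != F - h)) (Lset S F).
  have -> : count (predC (fun x => (x != h) && (x != F - h))) (Lset S F)
          = count (pred1 h) (Lset S F) + count (pred1 (F - h)) (Lset S F).
    rewrite -count_predUI.
    have -> : count (predI (pred1 h) (pred1 (F - h))) (Lset S F) = 0.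
      rewrite (@eq_count _ _ pred0) ?count_pred0 // => x /=.
      by apply/negbTE/andP => -[/eqP-> /eqP E]; move/eqP: ne.
    rewrite addn0; apply: eq_count => x /=; by rewrite negb_and !negbK.
  rewrite !count_uniq_mem // hL hL'.
  rewrite /= => <-; by rewrite addnK.
Qed.
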